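(* Let $y$ be a Lyndon word with $|y|>1$, written as $y=x^kzb$ where $x$ is a Lyndon word, $k\ge 1$, $|x|$ is the smallest period of $x^kz$, $z$ is a proper prefix of $x$ (possibly empty), $a$ is the letter such that $za$ is a prefix of $x$, and $b$ is a letter with $a<b$. For $e=0,1,\dots,k$ let $$P_e=\{\,w \text{ prefix of } y \;:\; e|x|<|w|<\min\{(e+1)|x|,\,|y|\}\,\}.$$ Then for all $0\le e<f\le k$, every $u\in P_e$ and every $v\in P_f$ satisfy $u\prec v$.
   Context: Lexicographic order $<$ on finite and infinite words: $u<v$ if $u$ is a proper prefix of $v$, or $u=ras$, $v=rbt$ with letters $a<b$. A Lyndon word is a non-empty word strictly smaller than each of its proper non-empty suffixes. Infinite ordering: for non-empty words $u,v$, $u\prec v$ iff $u^\infty<v^\infty$, or $u^\infty=v^\infty$ and $|u|>|v|$, where $u^\infty=uuu\cdots$. A period of a word $w$ is an integer $p\ge1$ with $w[i]=w[i+p]$ whenever both are defined. *)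

(* Defs.v *)
From HB Require Import structures.
From mathcomp Require Import all_boot all_order.
Set Implicit Arguments. Unset Strict Implicit. Unset Printing Implicit Defensive.
Import Order.TTheory.
Local Open Scope order_scope.

Section Words.
Variables (disp : Order.disp_t) (A : orderType disp).

Definition lexlt (u v : seq A) : Prop :=
  (prefix u v /\ u <> v) \/
  exists (r s t : seq A) (a b : A), u = r ++ a :: s /\ v = r ++ b :: t /\ a < b.

Definition lyndon (w : seq A) : Prop :=
  w <> [::] /\ forall i, 0 < i < size w -> lexlt w (drop i w).

Definition is_period (p : nat) (w : seq A) : Prop :=
  (1 <= p)%N /\ forall i, (i + p < size w)%N -> onth w i = onth w (i + p).

Definition smallest_period (p : nat) (w : seq A) : Prop :=
  is_period p w /\ forall q, is_period q w -> (p <= q)%N.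

Definition wpow (u : seq A) (k : nat) : seq A := flatten (nseq k u).

(* Infinite word u^oo = uuu..., as a sequence of letters (None only if u is empty). *)
Definition ipow (u : seq A) : nat -> option A :=
  match u with
  | [::] => fun _ => None
  | c :: _ => fun i => Some (nth c u (i %% size u))
  end.

Definition ilexlt (s t : nat -> option A) : Prop :=
  exists n, (forall i, (i < n)%N -> s i = t i) /\
    exists a b, s n = Some a /\ t n = Some b /\ a < b.

Definition iprec (u v : seq A) : Prop :=
  ilexlt (ipow u) (ipow v) \/
  ((forall i, ipow u i = ipow v i) /\ (size v < size u)%N).

Definition Pset (x y : seq A) (e : nat) (w : seq A) : Prop :=
  prefix w y /\ (e * size x < size w)%N /\
  (size w < minn (e.+1 * size x) (size y))%N.

End Words.

(* Main.v *)
Require Import Defs.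
From HB Require Import structures.
From mathcomp Require Import all_boot all_order.
From mathcomp Require Import zify.
Import Order.TTheory.
Set Implicit Arguments. Unset Strict Implicit.

Section S.
Variables (disp : Order.disp_t) (A : orderType disp).


Lemma lyn_fact (x : seq A) (c : A) q : lyndon x -> (0 < q < size x)%N ->
  exists t0, (t0 + q < size x)%N /\ (forall t, (t < t0)%N -> nth c x t = nth c x (q + t))
   /\ (nth c x t0 < nth c x (q + t0))%O.
Proof.
move=> [_ Hl] Hq; case: (Hl q Hq) => [[/size_prefix Hs _]|[r [s [t [a [b [Hx [Hd Hab]]]]]]]].
  move: Hs; rewrite size_drop => H; case/andP: Hq => H1 H2; exfalso.
  move: H H1 H2; set s := size x. lia.
have Hsz : size (drop q x) = size r + (size t).+1 by rewrite Hd size_cat.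
move: Hsz; rewrite size_drop => Hsz.
exists (size r); split; first lia.
split.
  move=> t' Ht; rewrite -nth_drop Hd Hx !nth_cat Ht //.
by rewrite -nth_drop Hd Hx !nth_cat ltnn subnn.
Qed.

Lemma nthW (x z : seq A) k i (c : A) : prefix z x -> (size z < size x)%N ->
  (i < size (wpow x k ++ z))%N -> nth c (wpow x k ++ z) i = nth c x (i %% size x).
Proof.
move=> /prefixP [s Hs] Hz; elim: k i => [|k IH] i /=.
  rewrite /wpow /= => Hi; rewrite modn_small; last lia.
  by rewrite Hs nth_cat Hi.
have -> : wpow x k.+1 = x ++ wpow x k by [].
rewrite -catA nth_cat size_cat => Hi.
case: ltnP => Hix; first by rewrite modn_small.
rewrite IH; last by move: Hi; rewrite !size_cat; lia.
by rewrite -(modnDr (i - size x)) subnK.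
Qed.

Lemma key (x : seq A) (c : A) m : lyndon x -> (0 < m)%N -> m %% size x != 0 ->
  exists j, (j < (m %/ size x).+1 * size x)%N /\
   (forall i, (i < j)%N -> nth c x ((i %% m) %% size x) = nth c x (i %% size x)) /\
   (nth c x ((j %% m) %% size x) < nth c x (j %% size x))%O.
Proof.
move=> Hly Hm Hq.
have Hp : (0 < size x)%N by case: Hly => H _; rewrite lt0n size_eq0; apply/eqP.
set p := size x in Hq Hp *.
have sm : forall i, (i < p)%N -> nth c x (i %% p) = nth c x i by move=> i Hi; rewrite modn_small.
case: (ltnP m p) => Hmp.
  have -> : m %/ p = 0 by rewrite divn_small.
  have [t0 [Ht0 [Hag Hlt]]] := lyn_fact c (q := m) Hly ltac:(lia).
  pose P j := (j < p)%N && (nth c x ((j %% m) %% p) != nth c x (j %% p)).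
  have exP : exists j, P j.
    case Hh: (has P (iota 0 p)); first by move/hasP: Hh => [j _ Pj]; exists j.
    move/negbT/hasPn: Hh => Hn; exfalso.
    have E1 := Hn t0; have E2 := Hn (m + t0).
    rewrite !mem_iota /P /= in E1 E2.
    have {}E1 := E1 ltac:(lia); have {}E2 := E2 ltac:(lia).
    have T1 : (t0 < p)%N by lia.
    have T2 : (m + t0 < p)%N by lia.
    move: E1 E2; rewrite T1 T2 /= !negbK => /eqP E1 /eqP E2.
    move: E1 E2.
    rewrite (sm _ T1) (sm _ T2) modnDl.
    rewrite (sm (t0 %% m)); last by have := ltn_pmod t0 Hm; lia.
    by move=> E1 E2; rewrite -E1 -E2 ltxx in Hlt.
  case: (ex_minnP exP) => j /andP [Hjp Hj] Hmin.
  have Hagr : forall i, (i < j)%N -> nth c x ((i %% m) %% p) = nth c x (i %% p).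
    move=> i Hi; apply/eqP; apply/negPn/negP => Hne.
    have H := Hmin i; rewrite /P Hne andbT in H; have := H ltac:(lia); lia.
  exists j; split; first by rewrite mul1n.
  split; first exact: Hagr.
  have Hjm : (m <= j)%N.
    rewrite leqNgt; apply/negP => Hjm.
    by move: Hj; rewrite (modn_small Hjm) eqxx.
  have Ejm : j %% m = (j - m) %% m by rewrite -(modnDr (j - m)) subnK.
  have Hjm' := Hagr (j - m) ltac:(lia).
  rewrite (sm (j - m)) in Hjm'; last by lia.
  rewrite Ejm Hjm' (sm j Hjp).
  case: (ltngtP t0 (j - m)) => Ht.
  - exfalso.
    have E1 := Hagr t0 ltac:(lia).
    have E2 := Hagr (m + t0) ltac:(lia).
    rewrite modnDl in E2.
    rewrite (sm t0) in E1; last by lia.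
    rewrite (sm (m + t0)) in E2; last by lia.
    by rewrite -E2 E1 ltxx in Hlt.
  - exfalso. have E := Hag _ Ht. rewrite subnKC // in E.
    by move: Hj; rewrite Ejm Hjm' (sm j Hjp) E eqxx.
  - by rewrite -Ht; move: Hlt; rewrite Ht subnKC.
have Hqp : (0 < m %% p < p)%N by rewrite lt0n Hq ltn_pmod.
have [t0 [Ht0 [Hag Hlt]]] := lyn_fact c Hly Hqp.
exists (m + t0); split.
  have Hd := divn_eq m p; rewrite mulSn.
  move: Hd Ht0; generalize (m %/ p * p) (m %% p) => D Q; lia.
have Hmq : forall n, (n + m) %% p = (n + m %% p) %% p by move=> n; rewrite modnDmr.
move: Hmq Hqp Hag Hlt Ht0; generalize (m %% p) => q Hmq Hqp Hag Hlt Ht0.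
split.
  move=> i Hi; case: (ltnP i m) => Him; first by rewrite (modn_small Him).
  have Ei : i = (i - m) + m by rewrite subnK.
  have T1 : (i - m < m)%N by lia.
  have T2 : (i - m + q < p)%N by lia.
  have T3 : (i - m < p)%N by lia.
  rewrite Ei modnDr (modn_small T1) Hmq (modn_small T2) (sm _ T3).
  rewrite addnC Hag //; lia.
have T1 : (t0 < m)%N by lia.
have T2 : (t0 + q < p)%N by lia.
have T3 : (t0 < p)%N by lia.
by rewrite addnC modnDr (modn_small T1) Hmq (modn_small T2) (sm _ T3) addnC.
Qed.
End S.
Unset Implicit Arguments. Set Strict Implicit.

Theorem mainTheorem5 (disp : Order.disp_t) (A : orderType disp)
  (y x z : seq A) (k : nat) (a b : A) :
  lyndon y -> (1 < size y)%N ->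
  y = wpow x k ++ z ++ [:: b] ->
  lyndon x -> (1 <= k)%N ->
  smallest_period (size x) (wpow x k ++ z) ->
  prefix z x -> (size z < size x)%N ->
  prefix (rcons z a) x ->
  (a < b)%O ->
  forall e f : nat, (e < f)%N -> (f <= k)%N ->
  forall u v : seq A, Pset x y e u -> Pset x y f v -> iprec u v.
Proof.
move=> _ _ Hy Hly _ _ Hzx Hzs _ _ e f Hef Hfk u v Hu Hv.
have Hp : (0 < size x)%N by case: Hly => H _; rewrite lt0n size_eq0; apply/eqP.
have [c _] : exists c : A, True by move: Hly => [+ _]; case: (x) => [//|c0 _ _]; exists c0.
rewrite catA in Hy.
have nthP : forall w e', Pset x y e' w -> forall i, (i < size w)%N ->
    nth c w i = nth c x (i %% size x).
  move=> w e' [Hw [H1 H2]] i Hi; move/prefixP: Hw => [s Hs].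
  have <- : nth c y i = nth c w i by rewrite Hs nth_cat Hi.
  have Hsy : size y = (size (wpow x k ++ z)).+1 by rewrite Hy size_cat addn1.
  have Hi' : (i < size (wpow x k ++ z))%N.
    move: H2; rewrite leq_min Hsy; case/andP => _ H3; lia.
  by rewrite Hy nth_cat Hi' nthW.
have ipowP : forall w e', Pset x y e' w -> forall i,
    ipow w i = Some (nth c x ((i %% size w) %% size x)).
  move=> w e' Hw i; have Hsz : (0 < size w)%N by case: Hw => _ [H _]; lia.
  move: Hw Hsz; case: w => [//|d w'] Hw Hsz /=; congr Some.
  by rewrite (set_nth_default c) ?ltn_pmod // (nthP _ _ Hw) // ltn_pmod.
have [_ [Hu1 Hu2]] := Hu; have [_ [Hv1 Hv2]] := Hv.
have Hu3 : (size u < e.+1 * size x)%N by move: Hu2; rewrite leq_min; case/andP.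
have Hv3 : (size v < f.+1 * size x)%N by move: Hv2; rewrite leq_min; case/andP.
have Hdiv : size u %/ size x = e.
  apply/eqP; rewrite eqn_leq -ltnS ltn_divLR // leq_divRL //; apply/andP; split; [exact: Hu3|exact: ltnW].
have Hmod : size u %% size x != 0.
  apply/negP => /eqP H0; move: (divn_eq (size u) (size x)); rewrite H0 addn0 Hdiv => E.
  by move: Hu1; rewrite E ltnn.
have Hm : (0 < size u)%N by lia.
have [j [Hj [Hag Hlt]]] := key c Hly Hm Hmod.
have Hjv : (j < size v)%N.
  apply: (leq_trans Hj); rewrite Hdiv; apply: leq_trans (ltnW Hv1).
  by rewrite leq_pmul2r.
left; exists j; split.
  move=> i Hi; rewrite (ipowP _ _ Hu) (ipowP _ _ Hv) Hag // (modn_small (m := i) (d := size v)) //; lia.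
exists (nth c x ((j %% size u) %% size x)), (nth c x ((j %% size v) %% size x)).
by rewrite (ipowP _ _ Hu) (ipowP _ _ Hv) (modn_small Hjv).
Qed.
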